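(* Let $p\ge 2$, $d\in\{0,\dots,9\}$ and $n\ge 10^{p-1}$ be integers, and let $k=\max\{i\in\mathbb N:10^{i+p}\le n\}$ (with $k=-1$ if this set is empty). Then $$P_{(d,n,p)}=\frac{1}{n+1-10^{p-1}}\Big(P_{(d,10^{k+p}-1,p)}\times(10^{k+p}-10^{p-1})+r_{(n,d,p)}\Big),$$ where, when $k=-1$, the product $P_{(d,10^{k+p}-1,p)}\times(10^{k+p}-10^{p-1})$ is taken to be $0$, and where, with $l=\big\lfloor\frac{n-(10^{p-1}+d)10^{k+1}}{10^{k+2}}\big\rfloor+10^{p-2}$: if the $p$-th digit of $n$ is $d$, \begin{align*} r_{(n,d,p)}=&\sum_{j=10^{p-2}}^{l}\ \sum_{b=(10j+d)10^{k+1}}^{\min(n,(10j+(d+1))10^{k+1}-1)}\frac{b-((9j+d)10^{k+1}+10^{p-2}-1)}{b+1-10^{p-1}}\\ &+\sum_{j=10^{p-2}-1}^{l-1}\ \sum_{a=\max(10^{p+k},(10j+(d+1))10^{k+1})}^{(10(j+1)+d)10^{k+1}-1}\frac{10^{k+1}(j+1)-10^{p-2}}{a+1-10^{p-1}}, \end{align*} and if the $p$-th digit of $n$ is different from $d$, \begin{align*} r_{(n,d,p)}=&\sum_{j=10^{p-2}}^{l}\ \sum_{b=(10j+d)10^{k+1}}^{(10j+(d+1))10^{k+1}-1}\frac{b-((9j+d)10^{k+1}+10^{p-2}-1)}{b+1-10^{p-1}}\\ &+\sum_{j=10^{p-2}-1}^{l}\ \sum_{a=\max(10^{p+k},(10j+(d+1))10^{k+1})}^{\min(n,(10(j+1)+d)10^{k+1}-1)}\frac{10^{k+1}(j+1)-10^{p-2}}{a+1-10^{p-1}}.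 \end{align*}
   Context: For an integer $x\ge 10^{p-1}$, the ''$p$-th digit of $x$'' is the $p$-th digit of its decimal expansion counted from the left. For $d\in\{0,\dots,9\}$ and $m\ge 10^{p-1}$, let $N_d(m)$ be the number of integers $x$ with $10^{p-1}\le x\le m$ whose $p$-th digit is $d$. For $N\ge 10^{p-1}$, $$P_{(d,N,p)}=\frac{1}{N+1-10^{p-1}}\sum_{m=10^{p-1}}^{N}\frac{N_d(m)}{m+1-10^{p-1}},$$ the probability that the $p$-th digit of $x$ is $d$ when $m$ is chosen uniformly in $\{10^{p-1},\dots,N\}$ and then $x$ uniformly in $\{10^{p-1},\dots,m\}$. Empty sums are zero. *)

(* Defs.v *)
From HB Require Import structures.
From mathcomp Require Import all_boot all_order all_algebra.
Set Implicit Arguments. Unset Strict Implicit. Unset Printing Implicit Defensive.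
Import Order.TTheory GRing.Theory Num.Theory.

(* Number of decimal digits of x > 0 : trunc_log 10 x is the largest e with 10^e <= x. *)
Definition ndigits (x : nat) : nat := (trunc_log 10 x).+1.

(* p-th decimal digit of x counted from the left (meaningful for x >= 10^(p-1)). *)
Definition pdigit (p x : nat) : nat := (x %/ 10 ^ (ndigits x - p)) %% 10.

Definition Ncount (d p m : nat) : nat :=
  \sum_(10 ^ (p - 1) <= x < m.+1 | pdigit p x == d) 1.

Local Open Scope ring_scope.

(* P_(d,N,p) as a rational number (meaningful for N >= 10^(p-1)). *)
Definition Prob (d N p : nat) : rat :=
  ((N.+1 - 10 ^ (p - 1))%N%:R)^-1 *
  \sum_(10 ^ (p - 1) <= m < N.+1)
     ((Ncount d p m)%:R / ((m.+1 - 10 ^ (p - 1))%N%:R)).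

Definition sumz (a b : int) (F : int -> rat) : rat :=
  if a <= b then \sum_(t < absz (b - a + 1)) F (a + t%:Z) else 0.

(* 10^e as an integer, for an integer exponent e >= 0 (only used with e >= 0). *)
Definition tp (e : int) : int := 10 ^+ absz e.

(* l = floor((n - (10^(p-1)+d) 10^(k+1)) / 10^(k+2)) + 10^(p-2);
   intdiv's %/ by a positive divisor is the floor. *)
Definition lval (n d p : nat) (k : int) : int :=
  ((n%:Z - ((10 ^ (p - 1))%N%:Z + d%:Z) * tp (k + 1)) %/ tp (k + 2))%Z
  + (10 ^ (p - 2))%N%:Z.

Definition rterm (n d p : nat) (k : int) : rat :=
  let l := lval n d p k in
  let q1 := (10 ^ (p - 1))%N%:Z in
  let q2 := (10 ^ (p - 2))%N%:Z in
  let K1 := tp (k + 1) in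
  let Fb j b : rat := (b - ((9 * j + d%:Z) * K1 + q2 - 1))%:~R / (b + 1 - q1)%:~R in
  let Fa j a : rat := (K1 * (j + 1) - q2)%:~R / (a + 1 - q1)%:~R in
  if pdigit p n == d then
    sumz q2 l (fun j =>
      sumz ((10 * j + d%:Z) * K1)
           (Order.min n%:Z ((10 * j + (d%:Z + 1)) * K1 - 1)) (Fb j))
    + sumz (q2 - 1) (l - 1) (fun j =>
      sumz (Order.max (tp (p%:Z + k)) ((10 * j + (d%:Z + 1)) * K1))
           ((10 * (j + 1) + d%:Z) * K1 - 1) (Fa j))
  else
    sumz q2 l (fun j =>
      sumz ((10 * j + d%:Z) * K1) ((10 * j + (d%:Z + 1)) * K1 - 1) (Fb j))
    + sumz (q2 - 1) l (fun j =>
      sumz (Order.max (tp (p%:Z + k)) ((10 * j + (d%:Z + 1)) * K1))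
           (Order.min n%:Z ((10 * (j + 1) + d%:Z) * K1 - 1)) (Fa j)).

(* Main.v *)
Require Import Defs.
From HB Require Import structures.
From mathcomp Require Import all_boot all_order all_algebra.
Import Order.TTheory GRing.Theory Num.Theory.
Local Open Scope ring_scope.
From mathcomp Require Import zify ring.
Set Implicit Arguments. Unset Strict Implicit. Unset Printing Implicit Defensive.

Module PartA.
Local Close Scope ring_scope.

Definition cnt0 K d m := \sum_(0 <= x < m | (x %/ K) %% 10 == d) 1.

Lemma cnt0S K d m : cnt0 K d m.+1 = cnt0 K d m + ((m %/ K) %% 10 == d).
Proof.
rewrite /cnt0 big_mkcond big_nat_recr //= -big_mkcond /=.
by case: eqP.
Qed.

Lemma digit_blk K d a s : 0 < K -> s < 10 * K ->
  (((10 * K * a + s) %/ K) %% 10 == d) = (d * K <= s < d * K + K).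
Proof.
move=> K0 sK.
have -> : 10 * K * a + s = (10 * a) * K + s by lia.
rewrite divnMDl // -modnDml mulnC modnMl add0n.
have e10 : s %/ K < 10 by rewrite ltn_divLR.
rewrite modn_small //.
apply/eqP/andP => [<-|[h1 h2]].
  split; first by rewrite leq_trunc_div.
  by rewrite -mulSnr ltn_ceil.
apply/eqP; rewrite eqn_leq; apply/andP; split.
  by rewrite -ltnS ltn_divLR // mulSnr.
by rewrite leq_divRL.
Qed.

Lemma cnt0_blk K d a s : 0 < K -> d <= 9 -> s <= 10 * K ->
  cnt0 K d (10 * K * a + s) = K * a + minn K (s - d * K).
Proof.
move=> K0 d9.
have dK : d * K <= 9 * K by rewrite leq_mul2r d9 orbT.
elim: a s => [|a IH] s.
  elim: s => [|s IHs] hs; first by rewrite muln0 add0n /cnt0 big_geq //; lia.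
  rewrite addnS cnt0S IHs ?(ltnW hs) // digit_blk //.
  rewrite !muln0 !add0n.
  case: leqP => h1; case: ltnP => h2 /=; lia.
move=> hs.
have -> : 10 * K * a.+1 + s = 10 * K * a + (10 * K + s) by lia.
elim: s hs => [|s IHs] hs.
  rewrite addn0 IH; lia.
rewrite !addnS cnt0S IHs ?(ltnW hs) //.
have -> : 10 * K * a + (10 * K + s) = 10 * K * a.+1 + s by lia.
rewrite digit_blk //.
all: try (case: leqP => h1; case: ltnP => h2 /=); lia.
Qed.


Lemma pdigit_len p L x : 0 < p -> p <= L.+1 -> 10 ^ L <= x < 10 ^ L.+1 ->
  pdigit p x = (x %/ 10 ^ (L.+1 - p)) %% 10.
Proof.
move=> p0 pL hx.
by rewrite /pdigit /ndigits (@trunc_log_eq _ L).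
Qed.

Lemma Ncount_split d p' i m :
  10 ^ (p'.+1 + i) <= m < 10 ^ (p'.+2 + i) ->
  Ncount d p'.+2 m + cnt0 (10 ^ i) d (10 ^ (p'.+1 + i)) =
  Ncount d p'.+2 (10 ^ (p'.+1 + i)).-1 + cnt0 (10 ^ i) d m.+1.
Proof.
move=> /andP[h1 h2].
have qL : 10 ^ (p'.+2 - 1) <= 10 ^ (p'.+1 + i) by rewrite leq_pexp2l // subn1 leq_addr.
have pos : 0 < 10 ^ (p'.+1 + i) by rewrite expn_gt0.
move: qL pos h1 h2; set X := 10 ^ (p'.+1 + i) => qL pos h1 h2.
rewrite /Ncount (@big_cat_nat _ _ _ X); last lia; last by [].
rewrite /cnt0 (@big_cat_nat _ _ _ X 0 m.+1); last lia; last by [].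
rewrite (prednK pos) -!addnA; congr (_ + _); rewrite addnC; congr (_ + _).
rewrite big_nat_cond [RHS]big_nat_cond; apply: eq_bigl => x.
case/boolP: (X <= x < m.+1) => //= /andP[hx1 hx2].
rewrite (@pdigit_len p'.+2 (p'.+1 + i)) //.
- by have -> : (p'.+1 + i).+1 - p'.+2 = i by lia.
- by rewrite -addSn leq_addr.
- rewrite hx1 /=. by apply: leq_ltn_trans h2.
Qed.


Lemma cnt0_pow d i j : d <= 9 -> cnt0 (10 ^ i) d (10 ^ (j.+1 + i)) = 10 ^ i * 10 ^ j.
Proof.
move=> d9.
have -> : 10 ^ (j.+1 + i) = 10 * 10 ^ i * 10 ^ j + 0 by rewrite addn0 expnD expnS; lia.
by rewrite cnt0_blk ?expn_gt0 // sub0n /minn ltn0 addn0.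
Qed.

Lemma Ncount_pow d p' i : d <= 9 ->
  Ncount d p'.+2 (10 ^ (p'.+1 + i)).-1 = 10 ^ p' * (10 ^ i - 1).
Proof.
move=> d9.
elim: i => [|i IH].
  rewrite addn0 expn0 subnn muln0 /Ncount big_geq // subn1.
  by rewrite prednK // expn_gt0.
have hh : 10 ^ (p'.+1 + i) <= (10 ^ (p'.+1 + i.+1)).-1 < 10 ^ (p'.+2 + i).
  have -> : p'.+2 + i = p'.+1 + i.+1 by lia.
  rewrite (addnS _ i) expnS.
  have : 0 < 10 ^ (p'.+1 + i) by rewrite expn_gt0.
  move: (10 ^ (p'.+1 + i)) => x hx; lia.
have h := @Ncount_split d p' i (10 ^ (p'.+1 + i.+1)).-1 hh.
have e1 : (10 ^ (p'.+1 + i.+1)).-1.+1 = 10 ^ (p'.+1 + i.+1) by rewrite prednK // expn_gt0.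
rewrite e1 IH in h. move: h.
rewrite (cnt0_pow i p' d9) (addnS p'.+1 i) -addSn (cnt0_pow i p'.+1 d9).
rewrite (expnS 10 p') (expnS 10 i).
have : 0 < 10 ^ i by rewrite expn_gt0.
move: (Ncount _ _ _) (10 ^ i) (10 ^ p') => N a b ha.
have hb : b <= b * a by rewrite leq_pmulr.
have hb2 : b <= b * (10 * a) by rewrite leq_pmulr // muln_gt0.
rewrite !mulnBr !muln1.
lia.
Qed.

Lemma bblock K d j m : 0 < K -> d <= 9 ->
  (10 * j + d) * K <= m < (10 * j + d + 1) * K ->
  cnt0 K d m.+1 = m.+1 - (9 * j + d) * K.
Proof.
move=> K0 d9 /andP[h1 h2].
have dK : d * K <= 9 * K by rewrite leq_mul2r d9 orbT.
have -> : m.+1 = 10 * K * j + (m.+1 - 10 * K * j) by lia.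
rewrite cnt0_blk //; lia.
Qed.

Lemma ablock K d j m : 0 < K -> d <= 9 ->
  (10 * j + d + 1) * K <= m < (10 * j + 10 + d) * K ->
  cnt0 K d m.+1 = K * j.+1.
Proof.
move=> K0 d9 /andP[h1 h2].
have dK : d * K <= 9 * K by rewrite leq_mul2r d9 orbT.
case: (leqP m.+1 (10 * K * j.+1)) => h3.
  have -> : m.+1 = 10 * K * j + (m.+1 - 10 * K * j) by lia.
  rewrite cnt0_blk //; lia.
have -> : m.+1 = 10 * K * j.+1 + (m.+1 - 10 * K * j.+1) by lia.
rewrite cnt0_blk //; lia.
Qed.

Lemma N_main d p' i0 m : d <= 9 ->
  10 ^ (p'.+1 + i0) <= m < 10 ^ (p'.+2 + i0) ->
  Ncount d p'.+2 m + 10 ^ p' = cnt0 (10 ^ i0) d m.+1.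
Proof.
move=> d9 hm.
have h := Ncount_split d hm.
rewrite (cnt0_pow i0 p' d9) (Ncount_pow p' i0 d9) /= in h.
have : 0 < 10 ^ i0 by rewrite expn_gt0.
move=> ha.
have hb : 10 ^ p' <= 10 ^ p' * 10 ^ i0 by rewrite leq_pmulr.
move: h; rewrite mulnBr muln1 (mulnC (10 ^ i0)).
move: (Ncount d p'.+2 m) => N.
move: (cnt0 (10 ^ i0) d m.+1) => C.
move: (10 ^ p' * 10 ^ i0) hb => X; lia.
Qed.

End PartA.
Import PartA.
Local Open Scope ring_scope.

Definition PS (c : int) (F : int -> rat) (x : int) : rat :=
  \sum_(t < absz (x - c)%R) F (c + t%:Z).

Lemma sumz_ext (a b : int) (F G : int -> rat) : (forall x, a <= x <= b -> F x = G x) ->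
  sumz a b F = sumz a b G.
Proof.
move=> h; rewrite /sumz; case: ifP => // hab.
apply: eq_bigr => t _; apply: h.
have := ltn_ord t; lia.
Qed.

Lemma sumz_PS (c a b : int) (F : int -> rat) : c <= a -> a <= b + 1 ->
  sumz a b F = PS c F (b + 1) - PS c F a.
Proof.
move=> ca ab; rewrite /sumz /PS.
have -> : absz (b + 1 - c)%R = addn (absz (a - c)%R) (absz (b - a + 1)%R) by lia.
rewrite big_split_ord /=.
case: ifP => hab.
  rewrite [RHS]addrC addKr.
  apply: eq_bigr => t _; congr F; move: (nat_of_ord t) => u; lia.
have -> : absz (b - a + 1)%R = 0%N by lia.
by rewrite big_ord0 addr0 subrr.
Qed.

Lemma sumz_tele (a b : int) (G g : int -> rat) : a <= b + 1 ->
  (forall j, a <= j <= b -> G j = g (j + 1) - g j) ->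
  sumz a b G = g (b + 1) - g a.
Proof.
move=> ab h; rewrite (sumz_ext h) /sumz.
case: ifP => hab; last first.
  have -> : b + 1 = a by lia.
  by rewrite subrr.
rewrite (eq_bigr (fun i : 'I_(absz (b - a + 1)%R) => g (a + (i.+1)%:Z) - g (a + i%:Z))); last first.
  by move=> i _; congr (g _ - g _); lia.
rewrite -(big_mkord xpredT (fun i => g (a + (i.+1)%:Z) - g (a + i%:Z))) telescope_sumr //.
congr (g _ - g _); lia.
Qed.

Lemma sumzD (a b : int) (F G : int -> rat) :
  sumz a b (fun j => F j + G j) = sumz a b F + sumz a b G.
Proof. by rewrite /sumz; case: ifP => _; rewrite ?big_split ?addr0. Qed.

Lemma sumz_shift (a b : int) (F : int -> rat) :
  sumz a b F = sumz (a + 1) (b + 1) (fun j => F (j - 1)).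
Proof.
rewrite /sumz.
have -> : (a + 1 <= b + 1) = (a <= b) by lia.
case: ifP => // _.
have -> : absz (b + 1 - (a + 1) + 1) = absz (b - a + 1)%R by lia.
apply: eq_bigr => t _; congr F; lia.
Qed.

Lemma sumz_last (a b : int) (F : int -> rat) : a <= b + 1 ->
  sumz a (b + 1) F = sumz a b F + F (b + 1).
Proof.
move=> ab; rewrite /sumz.
have -> : (a <= b + 1) = true by lia.
case: ifP => hab.
  have -> : absz (b + 1 - a + 1)%R = (absz (b - a + 1)%R).+1 by lia.
  rewrite big_ord_recr /=; congr (_ + F _); lia.
have -> : absz (b + 1 - a + 1)%R = 1%N by lia.
rewrite big_ord1 add0r; congr F; rewrite /=; lia.
Qed.


Definition hzf (Nf : nat -> nat) (q : nat) (x : int) : rat :=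
  (Nf (absz x))%:R / ((absz x).+1 - q)%N%:R.

Lemma castz (m : nat) : (m%:Z)%:~R = m%:R :> rat.
Proof. by []. Qed.

Section Core.
Variables (d K Q2 : nat) (Nf : nat -> nat).
Hypotheses (K0 : (0 < K)%N) (Q0 : (0 < Q2)%N) (d9 : (d <= 9)%N).
Hypothesis hN : forall m : nat, (10 * Q2 * K <= m < 100 * Q2 * K)%N ->
  (Nf m + Q2 = cnt0 K d m.+1)%N.

Lemma Lb (j x : int) : Q2%:Z <= j ->
  (10 * j + d%:Z) * K%:Z <= x <= (10 * j + (d%:Z + 1)) * K%:Z - 1 ->
  x < 100 * Q2%:Z * K%:Z ->
  (x - ((9 * j + d%:Z) * K%:Z + Q2%:Z - 1))%:~R / (x + 1 - 10 * Q2%:Z)%:~R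
  = hzf Nf (10 * Q2) x.
Proof.
move=> hj /andP[hx hx1] hx2.
have [jn ej] : exists jn : nat, j = jn%:Z by exists (absz j); lia.
subst j.
have f0 : 0 <= (10 * jn%:Z + d%:Z) * K%:Z by apply: mulr_ge0; lia.
have [xn ex] : exists xn : nat, x = xn%:Z by exists (absz x); lia.
subst x.
rewrite /hzf absz_nat.
have f1 : 0 <= jn%:Z * K%:Z by apply: mulr_ge0.
have f2 : 0 <= d%:Z * K%:Z by apply: mulr_ge0.
have f3 : Q2%:Z * K%:Z <= jn%:Z * K%:Z by apply: ler_wpM2r.
have f4 : d%:Z * K%:Z <= 9 * K%:Z by apply: ler_wpM2r => //; rewrite lez_nat.
have hb := @bblock K d jn xn K0 d9.
have hM : (10 * Q2 * K <= xn < 100 * Q2 * K)%N by lia.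
have h2 := hN hM.
have f5 : (Q2 <= Q2 * K)%N by rewrite leq_pmulr.
rewrite hb in h2; last by lia.
have -> : (xn%:Z - ((9 * jn%:Z + d%:Z) * K%:Z + Q2%:Z - 1)) = (Nf xn)%:Z by lia.
have -> : (xn%:Z + 1 - 10 * Q2%:Z) = (xn.+1 - 10 * Q2)%N%:Z by lia.
by rewrite !castz.
Qed.

Lemma La (j x : int) : 0 <= j ->
  (10 * j + (d%:Z + 1)) * K%:Z <= x <= (10 * (j + 1) + d%:Z) * K%:Z - 1 ->
  10 * Q2%:Z * K%:Z <= x < 100 * Q2%:Z * K%:Z ->
  (K%:Z * (j + 1) - Q2%:Z)%:~R / (x + 1 - 10 * Q2%:Z)%:~R
  = hzf Nf (10 * Q2) x.
Proof.
move=> hj /andP[hx hx1] hx2.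
have [jn ej] : exists jn : nat, j = jn%:Z by exists (absz j); lia.
subst j.
have [xn ex] : exists xn : nat, x = xn%:Z by exists (absz x); lia.
subst x.
rewrite /hzf absz_nat.
have f1 : 0 <= jn%:Z * K%:Z by apply: mulr_ge0.
have f2 : 0 <= d%:Z * K%:Z by apply: mulr_ge0.
have f4 : d%:Z * K%:Z <= 9 * K%:Z by apply: ler_wpM2r => //; rewrite lez_nat.
have hb := @ablock K d jn xn K0 d9.
have hM : (10 * Q2 * K <= xn < 100 * Q2 * K)%N by lia.
have h2 := hN hM.
have f5 : (Q2 <= Q2 * K)%N by rewrite leq_pmulr.
rewrite hb in h2; last by lia.
have -> : (K%:Z * (jn%:Z + 1) - Q2%:Z) = (Nf xn)%:Z by lia.
have -> : (xn%:Z + 1 - 10 * Q2%:Z) = (xn.+1 - 10 * Q2)%N%:Z by lia.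
by rewrite !castz.
Qed.

Lemma mK (a b : int) : a <= b -> a * K%:Z <= b * K%:Z.
Proof. by move=> h; apply: ler_wpM2r. Qed.

Lemma fdK : 0 <= d%:Z * K%:Z /\ d%:Z * K%:Z <= 9 * K%:Z.
Proof.
split; first by apply: mulr_ge0.
by apply: ler_wpM2r => //; rewrite lez_nat.
Qed.

Lemma fQK : Q2%:Z <= Q2%:Z * K%:Z.
Proof. have : (Q2 <= Q2 * K)%N by rewrite leq_pmulr. lia. Qed.

Let M := 10 * Q2%:Z * K%:Z.
Let hz := hzf Nf (10 * Q2).

Definition rt (n d D : nat) (l q1 q2 K1 Mz : int) : rat :=
  let Fb j b : rat := (b - ((9 * j + d%:Z) * K1 + q2 - 1))%:~R / (b + 1 - q1)%:~R in
  let Fa j a : rat := (K1 * (j + 1) - q2)%:~R / (a + 1 - q1)%:~R in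
  if D == d then
    sumz q2 l (fun j =>
      sumz ((10 * j + d%:Z) * K1)
           (Order.min n%:Z ((10 * j + (d%:Z + 1)) * K1 - 1)) (Fb j))
    + sumz (q2 - 1) (l - 1) (fun j =>
      sumz (Order.max Mz ((10 * j + (d%:Z + 1)) * K1))
           ((10 * (j + 1) + d%:Z) * K1 - 1) (Fa j))
  else
    sumz q2 l (fun j =>
      sumz ((10 * j + d%:Z) * K1) ((10 * j + (d%:Z + 1)) * K1 - 1) (Fb j))
    + sumz (q2 - 1) l (fun j =>
      sumz (Order.max Mz ((10 * j + (d%:Z + 1)) * K1))
           (Order.min n%:Z ((10 * (j + 1) + d%:Z) * K1 - 1)) (Fa j)).

Lemma sumz_shiftL (a b : int) (F : int -> rat) :
  sumz a b F = sumz (a - 1) (b - 1) (fun j => F (j + 1)).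
Proof.
rewrite (sumz_shift (a - 1)) !subrK; apply: sumz_ext => x _; congr F; lia.
Qed.

Lemma sumz_last' (a b : int) (F : int -> rat) : a <= b ->
  sumz a b F = sumz a (b - 1) F + F b.
Proof.
move=> ab; have := @sumz_last a (b - 1) F; rewrite subrK => ->//; lia.
Qed.

Variables (n D : nat) (l : int).
Hypotheses (hn : (10 * Q2 * K <= n < 100 * Q2 * K)%N)
  (hl1 : (10 * l + d%:Z) * K%:Z <= n%:Z < (10 * (l + 1) + d%:Z) * K%:Z)
  (hl2 : Q2%:Z - 1 <= l)
  (hD : (D == d) = (n%:Z < (10 * l + (d%:Z + 1)) * K%:Z)).

Lemma core : rt n d D l (10 * Q2%:Z) Q2%:Z K%:Z M = PS M hz (n%:Z + 1) - PS M hz M.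
Proof.
have [f2 f4] := fdK; have f5 := fQK.
move: hl1 => /andP[hl1a hl1b].
have hlK := mK hl2.
rewrite /rt hD; case: ifP => hE.
- rewrite (@sumz_ext Q2%:Z l _ (fun j => PS M hz (Order.min (n%:Z + 1) ((10 * j + (d%:Z + 1)) * K%:Z)) - PS M hz ((10 * j + d%:Z) * K%:Z))); last first.
    move=> j /andP[j1 j2]; have := mK j1; have := mK j2 => m1 m2.
    rewrite (@sumz_ext _ _ _ hz); last first.
      move=> x /andP[x1 x2]; apply: Lb => //; lia.
    rewrite (@sumz_PS M); try lia.
    congr (PS _ _ _ - _); lia.
  rewrite (@sumz_ext (Q2%:Z - 1) (l - 1) _ (fun j => PS M hz ((10 * (j + 1) + d%:Z) * K%:Z) - PS M hz (Order.max M ((10 * j + (d%:Z + 1)) * K%:Z)))); last first.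
    move=> j /andP[j1 j2]; have := mK j1; have := mK j2 => m1 m2.
    rewrite (@sumz_ext _ _ _ hz); last first.
      move=> x /andP[x1 x2]; apply: La => //; lia.
    rewrite (@sumz_PS M); try lia.
    congr (PS _ _ _ - _); lia.
  rewrite sumz_shiftL -sumzD.
  rewrite (@sumz_tele _ _ _ (fun j => PS M hz (Order.min (n%:Z + 1) (Order.max M ((10 * j + (d%:Z + 1)) * K%:Z))))); last first.
    move=> j /andP[j1 j2]; have := mK j1; have := mK j2 => m1 m2.
    have -> : Order.min (n%:Z + 1) (Order.max M ((10 * (j + 1) + (d%:Z + 1)) * K%:Z)) = Order.min (n%:Z + 1) ((10 * (j + 1) + (d%:Z + 1)) * K%:Z) by lia.
    have -> : Order.min (n%:Z + 1) (Order.max M ((10 * j + (d%:Z + 1)) * K%:Z)) = Order.max M ((10 * j + (d%:Z + 1)) * K%:Z) by lia.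
    have -> : 10 * (j + 1) + d%:Z = 10 * j + (d%:Z + 1) + 9 by ring.
    have -> : 10 * (j + 1) + (d%:Z + 1) = 10 * (j + 1) + d%:Z + 1 by ring.
    ring.
    lia.
  congr (PS _ _ _ - PS _ _ _); lia.
- have hE' : (10 * l + (d%:Z + 1)) * K%:Z <= n%:Z by lia.
  rewrite (@sumz_ext Q2%:Z l _ (fun j => PS M hz ((10 * j + (d%:Z + 1)) * K%:Z) - PS M hz ((10 * j + d%:Z) * K%:Z))); last first.
    move=> j /andP[j1 j2]; have := mK j1; have := mK j2 => m1 m2.
    rewrite (@sumz_ext _ _ _ hz); last first.
      move=> x /andP[x1 x2]; apply: Lb => //; lia.
    rewrite (@sumz_PS M); try lia.
    congr (PS _ _ _ - _); lia.
  rewrite (@sumz_ext (Q2%:Z - 1) l _ (fun j => PS M hz (Order.min (n%:Z + 1) ((10 * (j + 1) + d%:Z) * K%:Z)) - PS M hz (Order.max M ((10 * j + (d%:Z + 1)) * K%:Z)))); last first.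
    move=> j /andP[j1 j2]; have := mK j1; have := mK j2 => m1 m2.
    rewrite (@sumz_ext _ _ _ hz); last first.
      move=> x /andP[x1 x2]; apply: La => //; lia.
    rewrite (@sumz_PS M); try lia.
    congr (PS _ _ _ - _); lia.
  rewrite sumz_shiftL (@sumz_last' (Q2%:Z - 1) l); last by lia.
  rewrite addrA -sumzD.
  rewrite (@sumz_tele _ _ _ (fun j => PS M hz (Order.max M ((10 * j + (d%:Z + 1)) * K%:Z)))); last first.
    move=> j /andP[j1 j2]; have := mK j1; have := mK j2 => m1 m2.
    have -> : Order.min (n%:Z + 1) ((10 * (j + 1) + d%:Z) * K%:Z) = (10 * (j + 1) + d%:Z) * K%:Z by lia.
    have -> : Order.max M ((10 * (j + 1) + (d%:Z + 1)) * K%:Z) = (10 * (j + 1) + (d%:Z + 1)) * K%:Z by lia.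
    have -> : 10 * (j + 1) + (d%:Z + 1) = 10 * (j + 1) + d%:Z + 1 by ring.
    ring.
    lia.
  have -> : Order.min (n%:Z + 1) ((10 * (l + 1) + d%:Z) * K%:Z) = n%:Z + 1 by lia.
  have -> : Order.max M ((10 * (Q2%:Z - 1) + (d%:Z + 1)) * K%:Z) = M by lia.
  rewrite subrK; ring.
Qed.
End Core.


Lemma exp_split p' i0 n :
  (10 ^ (p'.+1 + i0) <= n < 10 ^ (p'.+2 + i0))%N ->
  (10 * 10 ^ p' * 10 ^ i0 <= n < 100 * 10 ^ p' * 10 ^ i0)%N.
Proof.
by rewrite !expnD !expnS !mulnA.
Qed.

Lemma get_i0 (p' n : nat) (k : int) :
  (10 ^ (p'.+2 - 1) <= n)%N ->
  (k = -1 /\ forall i : nat, ~ (10 ^ (i + p'.+2) <= n)%N) \/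
  (exists i : nat, [/\ k = i%:Z, (10 ^ (i + p'.+2) <= n)%N &
          forall i' : nat, (10 ^ (i' + p'.+2) <= n)%N -> (i' <= i)%N]) ->
  exists i0 : nat, [/\ k = i0%:Z - 1, (10 ^ (p'.+1 + i0) <= n < 10 ^ (p'.+2 + i0))%N
     & (k == -1) = (i0 == 0)%N].
Proof.
move=> hn [[-> h]|[i [-> h1 h2]]].
- exists 0%N; split => //.
  rewrite (_ : p'.+2 - 1 = p'.+1)%N // in hn; rewrite addn0 hn /= addn0.
  by rewrite ltnNge; apply/negP; move: (h 0%N); rewrite add0n.
- exists i.+1; split.
  + lia.
  + rewrite (_ : p'.+1 + i.+1 = i + p'.+2)%N ?h1 /=; last lia.
    rewrite ltnNge; apply/negP => hh.
    have := h2 i.+1; rewrite (_ : i.+1 + p'.+2 = p'.+2 + i.+1)%N; last lia.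
    by move=> /(_ hh); rewrite ltnn.
  + by [].
Qed.

Lemma tpE (e : int) (m : nat) : e = m%:Z -> tp e = (10 ^ m)%N%:Z.
Proof. by move=> ->; rewrite /tp absz_nat -natz natrX. Qed.

Lemma digit_l (K d n : nat) (l : int) : (0 < K)%N -> (d <= 9)%N -> 0 <= l ->
  (10 * l + d%:Z) * K%:Z <= n%:Z < (10 * (l + 1) + d%:Z) * K%:Z ->
  (((n %/ K) %% 10)%N == d) = (n%:Z < (10 * l + (d%:Z + 1)) * K%:Z).
Proof.
move=> K0 d9 l0 /andP[h1 h2].
have [ln el] : exists ln : nat, l = ln%:Z by exists (absz l); lia.
subst l.
have f1 : (d * K <= 9 * K)%N by rewrite leq_mul2r d9 orbT.
case: (ltnP n (10 * K * ln.+1)) => h3.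
  have -> : n = (10 * K * ln + (n - 10 * K * ln))%N by lia.
  rewrite digit_blk //; last lia.
  apply/idP/idP; lia.
have -> : n = (10 * K * ln.+1 + (n - 10 * K * ln.+1))%N by lia.
rewrite digit_blk //; last lia.
apply/idP/idP; lia.
Qed.

Lemma lval_facts (n d K Q2 : nat) (l : int) : (0 < K)%N -> (d <= 9)%N ->
  (10 * Q2 * K <= n)%N ->
  l = ((n%:Z - (10 * Q2%:Z + d%:Z) * K%:Z) %/ (10 * K%:Z))%Z + Q2%:Z ->
  (10 * l + d%:Z) * K%:Z <= n%:Z < (10 * (l + 1) + d%:Z) * K%:Z /\ Q2%:Z - 1 <= l.
Proof.
move=> K0 d9 hn ->.
have f1 : (d * K <= 9 * K)%N by rewrite leq_mul2r d9 orbT.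
have K0' : 0 < 10 * K%:Z by lia.
set x := (n%:Z - _).
have h1 := lez_floor x (lt0r_neq0 K0').
have h2 := ltz_ceil x K0'.
have h3 : -1 <= (x %/ (10 * K%:Z))%Z by rewrite lez_divRL //; rewrite /x; lia.
move: h1 h2 h3; move: (x %/ _)%Z => t h1 h2 h3.
rewrite /x in h1 h2.
split; last lia.
apply/andP; split; lia.
Qed.

Lemma sum_to_sumz (M n : nat) (f : nat -> rat) (g : int -> rat) : (M <= n.+1)%N ->
  (forall m : nat, g m%:Z = f m) ->
  \sum_(M <= m < n.+1) f m = sumz M%:Z n%:Z g.
Proof.
move=> hM hg; rewrite /sumz; case: ifP => h.
  rewrite -[in LHS](add0n M) big_addn big_mkord.
  have -> : (n.+1 - M)%N = absz (n%:Z - M%:Z + 1) by lia.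
  apply: eq_bigr => t _; rewrite -hg; congr g; lia.
rewrite big_geq //; lia.
Qed.

Theorem proposition4 (p d n : nat) (k : int)
  (hp : (2 <= p)%N) (hd : (d <= 9)%N) (hn : (10 ^ (p - 1) <= n)%N)
  (hk : (k = -1 /\ forall i : nat, ~ (10 ^ (i + p) <= n)%N) \/
        (exists i : nat, [/\ k = i%:Z, (10 ^ (i + p) <= n)%N &
                            forall i' : nat, (10 ^ (i' + p) <= n)%N -> (i' <= i)%N])) :
  Prob d n p =
  ((n.+1 - 10 ^ (p - 1))%N%:R)^-1 *
  ((if k == -1 then 0
    else Prob d (10 ^ (absz (k + p%:Z))%R - 1)%N p
         * (tp (k + p%:Z) - (10 ^ (p - 1))%N%:Z)%:~R)
   + rterm n d p k).
Proof.
case: p hp hn hk => [|[|p']] // _ hn hk.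
have [i0 [ek hni ekk]] := get_i0 hn hk.
rewrite ekk.
have hq : (10 ^ (p'.+2 - 1) = 10 * 10 ^ p')%N by rewrite subn1 /= expnS.
have hq2 : (p'.+2 - 2 = p')%N by lia.
have eM1 : (10 ^ (p'.+1 + i0) = 10 * 10 ^ p' * 10 ^ i0)%N by rewrite expnD expnS.
have eM2 : (10 ^ (p'.+2 + i0) = 100 * 10 ^ p' * 10 ^ i0)%N by rewrite expnD !expnS !mulnA.
have hN : forall m, (10 * 10 ^ p' * 10 ^ i0 <= m < 100 * 10 ^ p' * 10 ^ i0)%N ->
    (Ncount d p'.+2 m + 10 ^ p' = cnt0 (10 ^ i0) d m.+1)%N.
  by move=> m; rewrite -eM1 -eM2; exact: N_main.
have hD : (pdigit p'.+2 n == d) = (((n %/ 10 ^ i0) %% 10)%N == d).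
  rewrite (@pdigit_len p'.+2 (p'.+1 + i0)) //.
  - by rewrite (_ : ((p'.+1 + i0).+1 - p'.+2 = i0)%N) //; lia.
  - lia.
move: hni; rewrite eM1 eM2 => hni.
have er : rterm n d p'.+2 k = rt n d (pdigit p'.+2 n) (lval n d p'.+2 k)
   (10 ^ (p'.+2 - 1))%N%:Z (10 ^ (p'.+2 - 2))%N%:Z (tp (k + 1)) (tp (p'.+2%:Z + k)) by [].
have eK : tp (k + 1) = (10 ^ i0)%N%:Z by apply: tpE; lia.
have eMz : tp (p'.+2%:Z + k) = 10 * (10 ^ p')%N%:Z * (10 ^ i0)%N%:Z.
  by rewrite (@tpE _ (p'.+1 + i0)) ?eM1 //; lia.
have eMz' : tp (k + p'.+2%:Z) = 10 * (10 ^ p')%N%:Z * (10 ^ i0)%N%:Z by rewrite addrC.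
have hl : lval n d p'.+2 k = ((n%:Z - (10 * (10 ^ p')%N%:Z + d%:Z) * (10 ^ i0)%N%:Z) %/ (10 * (10 ^ i0)%N%:Z))%Z + (10 ^ p')%N%:Z.
  rewrite /lval hq hq2 eK (@tpE _ i0.+1); last lia.
  by rewrite expnS !PoszM.
rewrite er; move: (lval n d p'.+2 k) hl => l hl.
have K0 : (0 < 10 ^ i0)%N by rewrite expn_gt0.
have Q0 : (0 < 10 ^ p')%N by rewrite expn_gt0.
have [hl1 hl2] := lval_facts K0 hd (proj1 (andP hni)) hl.
have hD' : (pdigit p'.+2 n == d) = (n%:Z < (10 * l + (d%:Z + 1)) * (10 ^ i0)%N%:Z).
  rewrite hD (@digit_l _ _ _ l) //; lia.
have e10 : Posz 10%N = 10 by [].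
rewrite hq hq2 eK eMz PoszM e10.
rewrite (@core d (10 ^ i0) (10 ^ p') (Ncount d p'.+2) K0 Q0 hd hN n (pdigit p'.+2 n) l hni hl1 hl2 hD').
rewrite eMz' /Prob hq.
set Q2 := (10 ^ p')%N; set K := (10 ^ i0)%N.
congr (_ * _).
have hQK : (10 * Q2 <= 10 * Q2 * K)%N by rewrite leq_pmulr.
rewrite (@big_cat_nat _ _ _ (10 * Q2 * K)) //; last by move: hni; clear; lia.
rewrite (@sum_to_sumz _ _ _ (hzf (Ncount d p'.+2) (10 * Q2))); last first.
  by move=> m; rewrite /hzf absz_nat.
  move: hni; clear; lia.
have eMn : ((10 * Q2 * K)%N%:Z) = 10 * Q2%:Z * K%:Z by rewrite !PoszM e10.
rewrite eMn (@sumz_PS (10 * Q2%:Z * K%:Z)) //; last first.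
  rewrite -eMn; move: hni; clear; lia.
congr (_ + _).
case: eqP => [i00|i0n0] /=.
  by rewrite big_geq // /K i00 expn0 muln1.
have eabs : absz (k + p'.+2%:Z) = (p'.+1 + i0)%N by rewrite ek; clear -i0n0; lia.
rewrite eabs eM1 subn1 prednK; last by rewrite !muln_gt0 Q0.
have hQK' : (10 * Q2 < 10 * Q2 * K)%N.
  rewrite -{1}(muln1 (10 * Q2)%N) ltn_pmul2l ?muln_gt0 // /K.
  by case: i0 i0n0 {K hQK eMn hN eM1 eM2 eK eMz eMz' hl hl1 hl2 hD' K0 hni hD ek ekk eabs} => [|i] // _; rewrite expnS; have := expn_gt0 10 i; lia.
set S := \sum_(_ <= _ < _ | _) _.
rewrite mulrC mulrA.
have -> : (Posz 10 * Q2%:Z * K%:Z - Posz 10 * Q2%:Z) = (10 * Q2 * K - 10 * Q2)%N%:Z.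
  by move: hQK'; clear; lia.
rewrite castz mulfV ?mul1r //.
rewrite pnatr_eq0; move: hQK'; clear; lia.
Qed.
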